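(* Let $a=a_0+a_1e_1+a_2e_2+a_3e_3$ and $b=b_0+b_1e_1+b_2e_2+b_3e_3$ be nonzero elements of $C\ell_2$ with $H_a=H_b=0$, and let $d\in C\ell_2$. Then the equation $axb=d$ (in the unknown $x\in C\ell_2$) is solvable if and only if $$\frac{aa'db'b}{16(a_0^2+a_3^2)(b_0^2+b_3^2)}=d,$$ and in that case the general solution is $$x=\frac{a'db'}{16(a_0^2+a_3^2)(b_0^2+b_3^2)}+y-\frac{a'aybb'}{16(a_0^2+a_3^2)(b_0^2+b_3^2)},\qquad y\in C\ell_2 \text{ arbitrary}.$$
   Context: $C\ell_2$ is the 4-dimensional real associative algebra with basis $1,e_1,e_2,e_3$ and multiplication $e_1^2=e_2^2=1$, $e_3^2=-1$, $e_1e_2=e_3=-e_2e_1$, $e_1e_3=e_2=-e_3e_1$, $e_3e_2=e_1=-e_2e_3$. For $a=a_0+a_1e_1+a_2e_2+a_3e_3$ ($a_i\in\mathbb{R}$): $a'=a_0+a_1e_1+a_2e_2-a_3e_3$ and $H_a=a_0^2-a_1^2-a_2^2+a_3^2$. *)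

(* Defs.v *)
From Stdlib Require Import Reals.
Open Scope R_scope.

(* a = c0 + c1 e1 + c2 e2 + c3 e3 *)
Record cl2 : Type := mkcl2 { c0 : R; c1 : R; c2 : R; c3 : R }.

Definition cl2_zero : cl2 := mkcl2 0 0 0 0.

Definition cl2_add (a b : cl2) : cl2 :=
  mkcl2 (c0 a + c0 b) (c1 a + c1 b) (c2 a + c2 b) (c3 a + c3 b).

Definition cl2_sub (a b : cl2) : cl2 :=
  mkcl2 (c0 a - c0 b) (c1 a - c1 b) (c2 a - c2 b) (c3 a - c3 b).

Definition cl2_scale (r : R) (a : cl2) : cl2 :=
  mkcl2 (r * c0 a) (r * c1 a) (r * c2 a) (r * c3 a).

(* product from e1^2=e2^2=1, e3^2=-1, e1e2=e3=-e2e1, e1e3=e2=-e3e1, e3e2=e1=-e2e3 *)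
Definition cl2_mul (a b : cl2) : cl2 :=
  mkcl2 (c0 a * c0 b + c1 a * c1 b + c2 a * c2 b - c3 a * c3 b)
        (c0 a * c1 b + c1 a * c0 b - c2 a * c3 b + c3 a * c2 b)
        (c0 a * c2 b + c2 a * c0 b + c1 a * c3 b - c3 a * c1 b)
        (c0 a * c3 b + c3 a * c0 b + c1 a * c2 b - c2 a * c1 b).

Definition cl2_prime (a : cl2) : cl2 := mkcl2 (c0 a) (c1 a) (c2 a) (- c3 a).

Definition cl2_H (a : cl2) : R :=
  c0 a ^ 2 - c1 a ^ 2 - c2 a ^ 2 + c3 a ^ 2.

(* Main.v *)
Require Import Defs.
From Stdlib Require Import Reals Lra Psatz.
Open Scope R_scope.

Lemma key (a : cl2) : cl2_H a = 0 ->
  cl2_mul (cl2_mul a (cl2_prime a)) a = cl2_scale (4 * (c0 a ^ 2 + c3 a ^ 2)) a.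
Proof.
  destruct a as [a0 a1 a2 a3]; unfold cl2_H, cl2_mul, cl2_prime, cl2_scale; cbn [c0 Defs.c1 c2 c3]; intro H.
  f_equal; apply Rminus_diag_uniq.
  - transitivity ((-3*a0) * (a0 ^ 2 - a1 ^ 2 - a2 ^ 2 + a3 ^ 2)); [ring | rewrite H; ring].
  - transitivity ((-a1) * (a0 ^ 2 - a1 ^ 2 - a2 ^ 2 + a3 ^ 2)); [ring | rewrite H; ring].
  - transitivity ((-a2) * (a0 ^ 2 - a1 ^ 2 - a2 ^ 2 + a3 ^ 2)); [ring | rewrite H; ring].
  - transitivity ((-3*a3) * (a0 ^ 2 - a1 ^ 2 - a2 ^ 2 + a3 ^ 2)); [ring | rewrite H; ring].
Qed.

Lemma kpos (a : cl2) : a <> cl2_zero -> cl2_H a = 0 -> c0 a ^ 2 + c3 a ^ 2 > 0.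
Proof.
  destruct a as [a0 a1 a2 a3]; unfold cl2_H, cl2_zero; simpl; intros Hn H.
  destruct (Req_dec (a0^2 + a3^2) 0) as [E|E].
  - exfalso; apply Hn.
    assert (a0 = 0) by nra. assert (a3 = 0) by nra. assert (a1 = 0) by nra. assert (a2 = 0) by nra.
    subst; reflexivity.
  - nra.
Qed.

Ltac cl2_ring := repeat match goal with x : cl2 |- _ => destruct x end;
  unfold cl2_mul, cl2_scale, cl2_add, cl2_sub, cl2_prime; simpl; f_equal; ring.

Lemma scale_mull r x y : cl2_mul (cl2_scale r x) y = cl2_scale r (cl2_mul x y).
Proof. cl2_ring. Qed.
Lemma scale_mulr r x y : cl2_mul x (cl2_scale r y) = cl2_scale r (cl2_mul x y).
Proof. cl2_ring. Qed.
Lemma scale_scale r s x : cl2_scale r (cl2_scale s x) = cl2_scale (r * s) x.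
Proof. cl2_ring. Qed.
Lemma scale_1 x : cl2_scale 1 x = x.
Proof. cl2_ring. Qed.

Lemma mul_assoc x y z : cl2_mul (cl2_mul x y) z = cl2_mul x (cl2_mul y z).
Proof. cl2_ring. Qed.
Lemma sub_add_cancel s x : cl2_sub (cl2_add s x) s = x.
Proof. cl2_ring. Qed.
Lemma add_sub_cancel s x : cl2_sub (cl2_add s x) x = s.
Proof. cl2_ring. Qed.
Lemma distr a u y v b : cl2_mul (cl2_mul a (cl2_sub (cl2_add u y) v)) b =
  cl2_sub (cl2_add (cl2_mul (cl2_mul a u) b) (cl2_mul (cl2_mul a y) b)) (cl2_mul (cl2_mul a v) b).
Proof. cl2_ring. Qed.

Theorem theorem4p1 (a b d : cl2) :
  a <> cl2_zero -> b <> cl2_zero -> cl2_H a = 0 -> cl2_H b = 0 ->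
  let N := 16 * (c0 a ^ 2 + c3 a ^ 2) * (c0 b ^ 2 + c3 b ^ 2) in
  ((exists x : cl2, cl2_mul (cl2_mul a x) b = d) <->
     cl2_scale (/ N)
       (cl2_mul (cl2_mul (cl2_mul (cl2_mul a (cl2_prime a)) d) (cl2_prime b)) b)
     = d) /\
  (cl2_scale (/ N)
       (cl2_mul (cl2_mul (cl2_mul (cl2_mul a (cl2_prime a)) d) (cl2_prime b)) b)
     = d ->
   forall x : cl2,
     cl2_mul (cl2_mul a x) b = d <->
     exists y : cl2,
       x = cl2_sub
             (cl2_add
                (cl2_scale (/ N) (cl2_mul (cl2_mul (cl2_prime a) d) (cl2_prime b)))
                y)
             (cl2_scale (/ N)
                (cl2_mul (cl2_mul (cl2_mul (cl2_prime a) a) (cl2_mul y b)) (cl2_prime b)))).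
Proof.
  intros Ha Hb HA HB N.
  pose proof (kpos a Ha HA) as Pa. pose proof (kpos b Hb HB) as Pb.
  pose proof (key a HA) as Ka. pose proof (key b HB) as Kb.
  assert (NN : / N * (4 * (c0 a ^ 2 + c3 a ^ 2) * (4 * (c0 b ^ 2 + c3 b ^ 2))) = 1)
    by (unfold N; field; split; lra).
  assert (E1 : forall x, cl2_mul (cl2_mul (cl2_mul (cl2_mul a (cl2_prime a)) (cl2_mul (cl2_mul a x) b)) (cl2_prime b)) b
     = cl2_mul (cl2_mul (cl2_mul (cl2_mul a (cl2_prime a)) a) x) (cl2_mul (cl2_mul b (cl2_prime b)) b))
    by (intro; rewrite !mul_assoc; reflexivity).
  assert (E2 : forall x, cl2_scale (/N) (cl2_mul (cl2_mul (cl2_mul (cl2_mul a (cl2_prime a)) (cl2_mul (cl2_mul a x) b)) (cl2_prime b)) b) = cl2_mul (cl2_mul a x) b).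
  { intro x. rewrite E1, Ka, Kb; repeat rewrite ?scale_mull, ?scale_mulr, ?scale_scale.
    etransitivity; [| apply scale_1]; f_equal; rewrite <- NN; ring. }
  split; [split|].
  - intros [x <-]. apply E2.
  - intro C. exists (cl2_scale (/N) (cl2_mul (cl2_mul (cl2_prime a) d) (cl2_prime b))).
    etransitivity; [| exact C]. rewrite scale_mulr, scale_mull. f_equal.
    rewrite !mul_assoc; reflexivity.
  - intros C x. split.
    + intros <-. exists x.
      assert (F : cl2_mul (cl2_mul (cl2_prime a) (cl2_mul (cl2_mul a x) b)) (cl2_prime b)
        = cl2_mul (cl2_mul (cl2_mul (cl2_prime a) a) (cl2_mul x b)) (cl2_prime b))
        by (rewrite !mul_assoc; reflexivity).
      rewrite F, sub_add_cancel. reflexivity.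
    + intros [y ->].
      rewrite distr; repeat rewrite ?scale_mull, ?scale_mulr.
      assert (F1 : cl2_mul (cl2_mul a (cl2_mul (cl2_mul (cl2_prime a) d) (cl2_prime b))) b
        = cl2_mul (cl2_mul (cl2_mul (cl2_mul a (cl2_prime a)) d) (cl2_prime b)) b)
        by (rewrite !mul_assoc; reflexivity).
      assert (F2 : cl2_mul (cl2_mul a (cl2_mul (cl2_mul (cl2_mul (cl2_prime a) a) (cl2_mul y b)) (cl2_prime b))) b
        = cl2_mul (cl2_mul (cl2_mul (cl2_mul a (cl2_prime a)) (cl2_mul (cl2_mul a y) b)) (cl2_prime b)) b)
        by (rewrite !mul_assoc; reflexivity).
      rewrite F1, F2, C, E2. apply add_sub_cancel.
Qed.
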